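(* For every integer $n\ge 3$, $$\sum_{\substack{b\ge 0,\ k\ge 0\\ 2b+k+1=n}}\#\mathrm{SYT}^{+k}\big((b+1,b)\big)=\mathrm{Cat}(n)-\mathrm{Cat}(n-1)=\frac{3}{n+1}\binom{2n-2}{n},$$ where for $b=0$ the shape $(1,0)$ is the single-cell shape $(1)$ and $\mathrm{Cat}(m)=\frac1{m+1}\binom{2m}{m}$.
   Context: $\mathrm{SYT}^{+k}(\lambda)$: for a partition $\lambda$ of $N$ and $k\ge 0$, the set of fillings $S$ of the cells of the Ferrers diagram of $\lambda$ by nonempty sets of positive integers forming a set partition of $[N+k]$, such that $\max S(u)<\min S(v)$ whenever $u\ne v$ and $u$ is weakly northwest of $v$. *)

(* Defs.v *)
From mathcomp Require Import all_boot all_order all_algebra.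
Set Implicit Arguments. Unset Strict Implicit. Unset Printing Implicit Defensive.
Import GRing.Theory Num.Theory.

(* A partition lam = [:: lam_1; lam_2; ...] (weakly decreasing parts) of
   N = sumn lam.  Cells of its Ferrers diagram (English convention):
   (i, j) with row i < size lam and column j < lam_i (0-indexed).
   Column indices are bounded by sumn lam for finiteness. *)
Definition cell (lam : seq nat) := ('I_(size lam) * 'I_(sumn lam))%type.
Definition in_diagram (lam : seq nat) (c : cell lam) : bool :=
  nat_of_ord c.2 < nth 0 lam c.1.
Definition cells (lam : seq nat) := {c : cell lam | in_diagram c}.

Definition weakNW (lam : seq nat) (u v : cells lam) : bool :=
  (nat_of_ord (val u).1 <= (val v).1) && (nat_of_ord (val u).2 <= (val v).2).

(* SYT^{+k}(lam): fillings S of the cells by nonempty sets of integers that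
   form a set partition of [N+k] (here {0,...,N+k-1}, an order-preserving
   shift of {1,...,N+k}), such that max S(u) < min S(v) whenever u <> v and
   u is weakly northwest of v.  For nonempty sets, max S(u) < min S(v) is
   written out as: every element of S(u) is below every element of S(v). *)
Definition SYT_plus (lam : seq nat) (k : nat) :
  {set {ffun cells lam -> {set 'I_(sumn lam + k)}}} :=
  [set S : {ffun cells lam -> {set 'I_(sumn lam + k)}} | [&& [forall u, S u != set0],
              [forall u, forall v, (u != v) ==> [disjoint S u & S v]],
              (\bigcup_(u : cells lam) S u == setT) &
              [forall u, forall v, ((u != v) && weakNW u v) ==>
                 [forall x in S u, forall y in S v, nat_of_ord x < nat_of_ord y]]]].

Definition Cat (m : nat) : rat := ('C(m.*2, m))%:R / (m.+1)%:R.

(* Main.v *)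
Require Import Defs.
From mathcomp Require Import all_boot all_order all_algebra zify ring.
Set Implicit Arguments. Unset Strict Implicit. Unset Printing Implicit Defensive.

Section AllSeq.
Variables (T : eqType) (A : seq T).
Fixpoint allseq m : seq (seq T) :=
  if m is m'.+1 then [seq rcons s v | s <- allseq m', v <- A] else [:: [::]].

Lemma mem_allseq m s : (s \in allseq m) = (size s == m) && all (mem A) s.
Proof.
elim: m s => [|m IH] s /=.
  by rewrite inE; case: s.
apply/allpairsP/idP => [[[s' v] /= [Hs Hv ->]]|].
  move: Hs; rewrite IH size_rcons eqSS all_rcons => /andP[-> Ha] /=.
  by apply/andP; split.
case/lastP: s => [|s' v]; first by [].
rewrite size_rcons eqSS all_rcons => /andP[Hs /andP[Hv Ha]].
by exists (s', v); split => //; rewrite IH Hs.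
Qed.

Lemma uniq_allseq m : uniq A -> uniq (allseq m).
Proof.
move=> uA; elim: m => [|m IH] //=.
apply: allpairs_uniq => // [[s v] [s' v']] _ _ /= /rcons_inj.
by case=> -> ->.
Qed.

Lemma count_allseqS (P : pred (seq T)) m :
  count P (allseq m.+1) = \sum_(s <- allseq m) count (fun v => P (rcons s v)) A.
Proof.
rewrite /= count_flatten -map_comp sumnE big_map.
apply: eq_bigr => s _ /=. by rewrite count_map.
Qed.

Lemma count_allseqS_cons (P : pred (seq T)) m : uniq A ->
  count P (allseq m.+1) = \sum_(v <- A) count (fun s => P (v :: s)) (allseq m).
Proof.
move=> uA.
have pe : perm_eq (allseq m.+1) [seq v :: s | v <- A, s <- allseq m].
  apply: uniq_perm; first exact: uniq_allseq.
    apply: allpairs_uniq => //; first exact: uniq_allseq.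
    by move=> [v s] [v' s'] _ _ /= [-> ->].
  move=> s; rewrite mem_allseq; apply/idP/allpairsP.
    case: s => [|v s] //= /andP[Hs /andP[Hv Ha]].
    by exists (v, s); split => //; rewrite mem_allseq Ha andbT.
  move=> [[v s'] /= [Hv Hs ->]]; move: Hs; rewrite mem_allseq /= => /andP[H1 H2].
  by rewrite eqSS H1 Hv H2.
rewrite ((permP pe) P) count_flatten -map_comp sumnE big_map.
by apply: eq_bigr => v _ /=; rewrite count_map.
Qed.
End AllSeq.

Definition step (s : nat * nat) (x : nat) : option (nat * nat) :=
  let: (t, d) := s in
  match x with
  | 0 => if d <= t then Some (t.+1, d) else None
  | 1 => if d < t then Some (t, d) else None
  | 2 => if d < t then Some (t, d.+1) else None
  | 3 => if (0 < d) && (d <= t) then Some (t, d) else None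
  | _ => None end.

Definition stepo (o : option (nat * nat)) x := obind (step^~ x) o.
Definition runf s w := foldl stepo (Some s) w.
Definition A4 := iota 0 4.
Definition fin (o : option (nat * nat)) := if o is Some (t, d) then t == d.+1 else false.

Fixpoint G m h := if m is m'.+1 then
  G m' h.+1 + G m' h + (if h is h'.+1 then G m' h + G m' h' else 0) else (h == 1 : nat).
Fixpoint F m h := if m is m'.+1 then
  F m' h.+1 + (if h is h'.+1 then F m' h + G m' h' else 0) else (h == 1 : nat).

Lemma foldl_none w : foldl stepo None w = None.
Proof. by elim: w. Qed.

Lemma runf_cons s v w : runf s (v :: w) =
  if step s v is Some s' then runf s' w else None.
Proof. by rewrite /runf /=; case: (step s v) => // ; rewrite foldl_none. Qed.

Lemma Fw_eq m t d : d <= t ->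
  count (fun w => fin (runf (t, d) w)) (allseq A4 m) =
  if d == 0 then F m (t - d) else G m (t - d).
Proof.
elim: m t d => [|m IH] t d dt.
  have E : (t == d.+1) = (t - d == 1) by apply/eqP/eqP; lia.
  by rewrite /= addn0 /runf /= E; case: ifP.
rewrite count_allseqS_cons; last by [].
rewrite /A4 /= !big_cons big_nil addn0.
have rc : forall v, (fun w => fin (runf (t,d) (v::w))) =1
   (fun w => fin (if step (t,d) v is Some s' then runf s' w else None)).
  by move=> v w; rewrite runf_cons.
rewrite !(eq_count (rc _)) /= dt {rc}.
change [:: 0; 1; 2; 3] with A4.
have c0 : forall s : seq (seq nat), count (fun _ => false) s = 0 by elim.
have [h ->] : exists h, t = d + h by exists (t - d); rewrite subnKC.
have -> : d + h - d = h by lia.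

rewrite (IH (d+h).+1 d); last by lia.
have -> : (d + h).+1 - d = h.+1 by lia.
case: h dt => [|h] dt.
  rewrite addn0 ltnn /=.
  case: d dt => [|d] dt /=; first by rewrite c0.
  by rewrite (IH d.+1 d.+1) // subnn /= !c0 addn0.
have -> : d < d + h.+1 by lia.
rewrite (IH (d + h.+1) d) ?(IH (d + h.+1) d.+1); try lia.
have -> : d + h.+1 - d = h.+1 by lia.
have -> : d + h.+1 - d.+1 = h by lia.
case: d dt => [|d] dt /=; first by rewrite c0; lia.
rewrite (IH (d.+1 + h.+1) d.+1); last lia.
have -> : d.+1 + h.+1 - d.+1 = h.+1 by lia.
by rewrite /=; lia.
Qed.

Lemma sum_step o a c :
  \sum_(v <- A4) (stepo o v == Some (a, c) : nat) =
  ((c < a) && (o == Some (a.-1, c))) + ((c < a) && (o == Some (a, c))) +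
  ((0 < c) && (c <= a) && (o == Some (a, c.-1))) +
  ((0 < c) && (c <= a) && (o == Some (a, c))).
Proof.
rewrite /A4 /= !big_cons big_nil.
case: o => [[t d]|] /=; last by rewrite !andbF.
rewrite /eq_op /=.
case: (leqP d t) => H1; case: (ltnP d t) => H2; case: (posnP d) => [H3|H3] /=;
  rewrite ?xpair_eqE; do ?[case: eqP => ?]; rewrite /= ?andbF ?andbT; lia.
Qed.

Lemma count_sum (T : Type) (P : pred T) s : count P s = \sum_(x <- s) (P x : nat).
Proof. by elim: s => [|x s IH]; rewrite ?big_nil ?big_cons //= IH. Qed.

Definition Nw m a c := count (fun w => runf (0, 0) w == Some (a, c)) (allseq A4 m).

Lemma Nw_rec m a c : Nw m.+1 a c =
  (c < a) * (Nw m a.-1 c + Nw m a c) + ((0 < c) && (c <= a)) * (Nw m a c.-1 + Nw m a c).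
Proof.
rewrite /Nw count_allseqS.
under eq_bigr => s _ do rewrite count_sum.
under eq_bigr => s _ do under eq_bigr => v _ do rewrite /runf foldl_rcons.
under eq_bigr => s _ do rewrite sum_step.
rewrite !big_split /= !count_sum !mulnDr !big_distrr /=.
rewrite -!addnA; congr (_ + (_ + (_ + _))); apply: eq_bigr => i _; by rewrite mulnb.
Qed.

Lemma runf_bound w t d : runf (0, 0) w = Some (t, d) -> t + d <= size w.
Proof.
elim/last_ind: w t d => [|w v IH] t d; first by case=> <- <-.
rewrite /runf foldl_rcons -/(runf _ w) size_rcons /stepo.
case: (runf (0,0) w) IH => [[t' d']|] IH //= H.
have := IH _ _ erefl.
move: H; case: v => [|[|[|[|v]]]] /=; do ?case: ifP => _; try discriminate; case=> <- <-; lia.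
Qed.

Lemma F_G_pair m h : 0 < h -> F m h + F m h.+1 = G m h.
Proof.
elim: m h => [|m IH] h hpos /=; first by case: h hpos => [|[|h]].
case: h hpos => [|h] // _.
have := IH h.+1 erefl; have := IH h.+2 erefl.
case: h => [|h] /=; lia.
Qed.

Lemma F0_G m : F m.+2 0 = G m.+1 0.
Proof.
rewrite /= !addn0.
case: m => [|m]; first by [].
have := F_G_pair m.+1 (h:=1) erefl.
lia.
Qed.

Definition NW (x y : bool * nat) := (x.1 ==> y.1) && (x.2 <= y.2).
Definition inshape a c (x : bool * nat) := if x.1 then x.2 < c else x.2 < a.
Definition shapecells a c : seq (bool * nat) :=
  [seq (false, j) | j <- iota 0 a] ++ [seq (true, j) | j <- iota 0 c].
Definition okp (x y : bool * nat) := (y == x) || ~~ NW y x.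
Definition good a c (s : seq (bool * nat)) :=
  [&& c <= a, all (inshape a c) s, all (fun u => u \in s) (shapecells a c) &
      pairwise okp s].

Lemma mem_shapecells a c u : (u \in shapecells a c) = inshape a c u.
Proof.
case: u => [r j]; rewrite mem_cat /inshape.
case: r => /=.
  rewrite (_ : ((true, j) \in _) = false); last first.
    by apply/mapP => -[i _ []].
  by rewrite mem_map ?mem_iota //; move=> x y [].
rewrite (_ : ((false, j) \in [seq (true, j) | j <- iota 0 c]) = false) ?orbF; last first.
  by apply/mapP => -[i _ []].
by rewrite mem_map ?mem_iota //; move=> x y [].
Qed.

Lemma goodP a c s : reflect
  [/\ c <= a, {in s, forall x, inshape a c x}, (forall u, inshape a c u -> u \in s) &
      pairwise okp s] (good a c s).
Proof.
apply: (iffP and4P) => -[h1 h2 h3 h4]; split => //.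
- by move/allP: h2.
- by move=> u hu; move/allP: h3; apply; rewrite mem_shapecells.
- by apply/allP.
- by apply/allP => u; rewrite mem_shapecells => /h3.
Qed.

Lemma good_sub a c a' c' s v : c' <= a' -> v \notin s ->
  {in s, forall x, inshape a c x} -> (forall u, inshape a c u -> u \in rcons s v) ->
  pairwise okp s -> (forall x, inshape a c x -> x != v -> inshape a' c' x) ->
  (forall u, inshape a' c' u -> inshape a c u) -> ~~ inshape a' c' v -> good a' c' s.
Proof.
move=> ca vs hin hcov hpw hx hu hv; apply/goodP; split => //.
  move=> x xs; apply: hx; first exact: hin.
  by apply: contraNneq vs => <-.
move=> u /[dup] hu' /hu /hcov; rewrite mem_rcons in_cons => /orP[/eqP euv|] //.
by move: hv; rewrite -euv hu'.
Qed.

Lemma good_same a c s v : v \in s -> good a c (rcons s v) -> good a c s.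
Proof.
move=> vs /goodP[ca hin hcov]; rewrite pairwise_rcons => /andP[_ hpw].
apply/goodP; split => //.
  by move=> x xs; apply: hin; rewrite mem_rcons in_cons xs orbT.
move=> u /hcov; rewrite mem_rcons in_cons => /orP[/eqP ->|] //.
Qed.

Lemma good_either a c a' c' s : good a c s || good a' c' s -> a' <= a -> c' <= c ->
  [/\ {in s, forall x, inshape a c x}, pairwise okp s &
       forall u, inshape a c u -> (u \in s) || ~~ inshape a' c' u].
Proof.
move=> /orP[] /goodP[ca hin hcov hpw] ha hc.
  by split => // u hu; rewrite hcov.
split => //.
- move=> x xs; have := hin x xs; case: x {xs} => [[] j]; rewrite /inshape /=; lia.
- move=> u _; case: (boolP (inshape a' c' u)) => [/hcov -> // | h]; by apply/orP; right.
Qed.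

Lemma good_rcons a c s v : good a c (rcons s v) =
  ((v == (false, a.-1)) && (c < a) && (good a c s || good a.-1 c s)) ||
  ((v == (true, c.-1)) && (0 < c) && (c <= a) && (good a c s || good a c.-1 s)).
Proof.
apply/idP/idP.
  move=> /[dup] hg /goodP[ca hin hcov].
  rewrite pairwise_rcons => /andP[/allP hv hpw].
  have hinv : inshape a c v by apply: hin; rewrite mem_rcons mem_head.
  have hin' : {in s, forall x, inshape a c x}.
    by move=> x xs; apply: hin; rewrite mem_rcons in_cons xs orbT.
  have key : forall u, inshape a c u -> u != v -> ~~ NW v u.
    move=> u hu uv; have := hcov u hu; rewrite mem_rcons in_cons (negbTE uv) /=.
    by move=> /hv; rewrite /okp eq_sym (negbTE uv).
  case: v hinv hv hg key hin hcov => [[] j] /= hinv hv hg key hin hcov; rewrite /inshape /= in hinv.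
    have ej : j = c.-1.
      case: (ltnP j.+1 c) => h; last by rewrite /inshape /= in hinv; lia.
      have ne : (true, j.+1) != (true, j) by rewrite xpair_eqE /=; lia.
      by have := key (true, j.+1) h ne; rewrite /NW /= leqnSn.
    subst j; rewrite eqxx /= ca andbT; apply/andP; split; first by lia.
    case: (boolP ((true, c.-1) \in s)) => vs.
      by rewrite (good_same vs hg).
    apply/orP; right; apply: (good_sub (a:=a) (c:=c) (v:=(true,c.-1))) => //.
    - by lia.
    - case=> [[] x]; rewrite /inshape /= => hx; rewrite ?xpair_eqE /= => hne; lia.
    - by case=> [[] x]; rewrite /inshape /=; lia.
    - by rewrite /inshape /=; lia.
  have ej : j = a.-1.
    case: (ltnP j.+1 a) => h; last by rewrite /inshape /= in hinv; lia.
    have ne : (false, j.+1) != (false, j) by rewrite xpair_eqE /=; lia.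
    by have := key (false, j.+1) h ne; rewrite /NW /= leqnSn.
  subst j; rewrite eqxx /=.
  have lt_ca : c < a.
    case: (ltnP c a) => // h.
    have := key (true, a.-1); rewrite /inshape /NW /= leqnn /=.
    by move=> /(_ _ isT); apply; lia.
  rewrite lt_ca /= orbF.
  case: (boolP ((false, a.-1) \in s)) => vs.
    by rewrite (good_same vs hg).
  apply/orP; right; apply: (good_sub (a:=a) (c:=c) (v:=(false,a.-1))) => //.
  - by lia.
  - case=> [[] x]; rewrite /inshape /= => hx; rewrite ?xpair_eqE /= => hne; lia.
  - by case=> [[] x]; rewrite /inshape /=; lia.
  - by rewrite /inshape /=; lia.
case/orP => [/andP[/andP[/eqP -> ca] hs]|/andP[/andP[/andP[/eqP -> c0] ca] hs]].
  have [hin hpw hcov] := good_either hs (leq_pred a) (leqnn c).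
  apply/goodP; split; first by lia.
  - move=> x; rewrite mem_rcons in_cons => /orP[/eqP ->|/hin //].
    by rewrite /inshape /=; lia.
  - move=> u hu; rewrite mem_rcons in_cons; case: eqP => //= /eqP ne.
    have := hcov u hu; case: (u \in s) => //=.
    move: ne hu; case: u => [[] j]; rewrite /inshape ?xpair_eqE /=; lia.
  - rewrite pairwise_rcons hpw andbT; apply/allP => x /hin.
    rewrite /okp /NW; case: x => [[] j]; rewrite /inshape ?xpair_eqE /= => hx;
      try case: eqP => //= ?; lia.
have [hin hpw hcov] := good_either hs (leqnn a) (leq_pred c).
apply/goodP; split => //.
- move=> x; rewrite mem_rcons in_cons => /orP[/eqP ->|/hin //].
  by rewrite /inshape /=; lia.
- move=> u hu; rewrite mem_rcons in_cons; case: eqP => //= /eqP ne.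
  have := hcov u hu; case: (u \in s) => //=.
  move: ne hu; case: u => [[] j]; rewrite /inshape ?xpair_eqE /=; lia.
- rewrite pairwise_rcons hpw andbT; apply/allP => x /hin.
  rewrite /okp /NW; case: x => [[] j]; rewrite /inshape ?xpair_eqE /= => hx;
    try case: eqP => //= ?; lia.
Qed.

Definition alphB B : seq (bool * nat) := [seq (r, j) | r <- [:: false; true], j <- iota 0 B].

Lemma uniq_alphB B : uniq (alphB B).
Proof.
apply: allpairs_uniq => //; first exact: iota_uniq.
by move=> [r j] [r' j'] _ _ /= [-> ->].
Qed.

Lemma mem_alphB B r j : ((r, j) \in alphB B) = (j < B).
Proof.
apply/allpairsP/idP => [[[r' j'] /= [_ hj [_ ->]]]|hj].
  by move: hj; rewrite mem_iota.
by exists (r, j); split => //; [case: r | rewrite mem_iota].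
Qed.

Lemma count_eqand (T : eqType) (l : seq T) p (X : bool) : uniq l ->
  count (fun v => (v == p) && X) l = X && (p \in l).
Proof.
move=> ul; case: X => /=; last by elim: l {ul} => //= x l ->; rewrite andbF.
by under eq_count do rewrite andbT; rewrite -count_uniq_mem.
Qed.

Lemma count_eqand2 (T : eqType) (l : seq T) p (X Y : bool) : uniq l ->
  count (fun v => (v == p) && X && Y) l = X && Y && (p \in l).
Proof.
move=> ul; rewrite (eq_count (a2 := fun v => (v == p) && (X && Y))).
  by rewrite count_eqand.
by move=> v; rewrite andbA.
Qed.

Lemma count_eqand3 (T : eqType) (l : seq T) p (X Y Z : bool) : uniq l ->
  count (fun v => (v == p) && X && Y && Z) l = X && Y && Z && (p \in l).
Proof.
move=> ul; rewrite (eq_count (a2 := fun v => (v == p) && (X && Y && Z))).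
  by rewrite count_eqand.
by move=> v; rewrite !andbA.
Qed.

Lemma good_excl_a a c s : c < a -> good a c s -> good a.-1 c s -> False.
Proof.
move=> ca /goodP[_ _ hcov _] /goodP[_ hin _ _].
have h1 : inshape a c (false, a.-1) by rewrite /inshape /=; lia.
move: (hin _ (hcov _ h1)); rewrite /inshape /=; lia.
Qed.

Lemma good_excl_c a c s : 0 < c -> good a c s -> good a c.-1 s -> False.
Proof.
move=> ca /goodP[_ _ hcov _] /goodP[_ hin _ _].
have h1 : inshape a c (true, c.-1) by rewrite /inshape /=; lia.
move: (hin _ (hcov _ h1)); rewrite /inshape /=; lia.
Qed.

Lemma count_or_disj (T : Type) (P1 P2 : pred T) l :
  (forall v, P1 v -> P2 v -> False) ->
  count (fun v => P1 v || P2 v) l = count P1 l + count P2 l.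
Proof.
move=> dis; elim: l => //= x l ->.
case h1: (P1 x); case h2: (P2 x) => /=; rewrite ?add0n ?add1n ?addnS ?addSn //.
by case: (dis x); rewrite ?h1 ?h2.
Qed.

Lemma count_good_rcons B s a c : a <= B -> c <= B ->
  count (fun v => good a c (rcons s v)) (alphB B) =
  (c < a) * (good a c s + good a.-1 c s) +
  ((0 < c) && (c <= a)) * (good a c s + good a c.-1 s).
Proof.
move=> aB cB.
under eq_count do rewrite good_rcons.
rewrite count_or_disj; last first.
  by move=> v /andP[/andP[/eqP -> _] _] /andP[/andP[/andP[]]].
rewrite count_eqand2 ?count_eqand3 ?uniq_alphB // !mem_alphB.
congr (_ + _).
  case: (ltnP c a) => ca /=; last by [].
  have -> : a.-1 < B by lia.
  rewrite andbT mul1n.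
  case g1: (good a c s); case g2: (good a.-1 c s) => //.
  by case: (good_excl_a ca g1 g2).
case: (posnP c) => c0 /=; first by rewrite c0.
case: (leqP c a) => ca /=; last by [].
have -> : c.-1 < B by lia.
rewrite andbT mul1n.
case g1: (good a c s); case g2: (good a c.-1 s) => //.
by case: (good_excl_c c0 g1 g2).
Qed.

Definition Nc B m a c := count (good a c) (allseq (alphB B) m).

Lemma Nc_rec B m a c : a <= B -> c <= B -> Nc B m.+1 a c =
  (c < a) * (Nc B m a.-1 c + Nc B m a c) +
  ((0 < c) && (c <= a)) * (Nc B m a c.-1 + Nc B m a c).
Proof.
move=> aB cB; rewrite /Nc count_allseqS.
under eq_bigr => s _ do rewrite count_good_rcons //.
rewrite big_split /= -!big_distrr /= !big_split /= -!count_sum.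
by rewrite [Nc _ _ _ _ + _]addnC [count (good a c) _ + count (good a c.-1) _]addnC.
Qed.

Lemma Nc_Nw B m a c : a <= B -> c <= B -> Nc B m a c = Nw m a c.
Proof.
elim: m a c => [|m IH] a c aB cB.
  rewrite /Nc /Nw /= /runf /= addn0.
  rewrite addn0; congr (nat_of_bool _).
  apply/idP/idP.
    move=> /goodP[ca _ hcov _].
    case: a aB ca hcov => [|a] aB ca hcov; last first.
      by have := hcov (false, 0); rewrite /inshape /= => /(_ isT).
    case: c cB ca hcov => [|c] //.
  by case/eqP=> <- <-; apply/goodP; split => //; case=> [[] j].
rewrite Nc_rec // Nw_rec !IH //; lia.
Qed.

Section Bij.
Variables b k : nat.
Local Notation lam := [:: b.+1; b].
Local Notation N := (sumn lam).
Local Notation M := (sumn lam + k).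

Definition emb (u : cells lam) : bool * nat :=
  (nat_of_ord (val u).1 == 1, nat_of_ord (val u).2).

Lemma emb_inj : injective emb.
Proof.
move=> [[r j] hu] [[r' j'] hu'] [] /= e1 e2.
apply/val_inj => /=; congr pair; apply/val_inj => //=.
move: e1 (ltn_ord r) (ltn_ord r').
by case: (nat_of_ord r) => [|[|?]]; case: (nat_of_ord r') => [|[|?]].
Qed.

Lemma emb_shape u : inshape b.+1 b (emb u).
Proof.
case: u => [[r j] hu]; move: hu; rewrite /in_diagram /inshape /=.
move: (ltn_ord r); case: (nat_of_ord r) => [|[|?]] //.
Qed.

Lemma emb_NW u v : weakNW u v = NW (emb u) (emb v).
Proof.
case: u => [[r j] hu]; case: v => [[r' j'] hv]; rewrite /weakNW /NW /=.
congr (_ && _); move: (ltn_ord r) (ltn_ord r').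
by case: (nat_of_ord r) => [|[|?]]; case: (nat_of_ord r') => [|[|?]].
Qed.

Lemma emb_surj p : inshape b.+1 b p -> exists u, emb u = p.
Proof.
case: p => [r j]; rewrite /inshape /= => hj.
have hjN : j < N by rewrite /=; case: r hj; lia.
have hr : (r : nat) < 2 by case: (r).
have hd : in_diagram ((Ordinal hr : 'I_(size lam)), Ordinal hjN).
  by rewrite /in_diagram /=; move: hj; case: (r).
by exists (exist (fun c => in_diagram c) _ hd); rewrite /emb /=; case: (r).
Qed.

Definition psi (s : seq (bool * nat)) : {ffun cells lam -> {set 'I_M}} :=
  [ffun u => [set x : 'I_M | nth (false, 0) s x == emb u]].

Lemma psi_SYT s : size s = M -> good b.+1 b s -> psi s \in SYT_plus lam k.
Proof.
move=> sz /goodP[_ hin hcov hpw]; rewrite inE; apply/and4P; split.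
- apply/forallP => u; apply/set0Pn.
  have hu := hcov _ (emb_shape u).
  have hi : index (emb u) s < M by rewrite -sz index_mem.
  by exists (Ordinal hi); rewrite ffunE inE /= nth_index.
- apply/forallP => u; apply/forallP => v; apply/implyP => uv.
  rewrite -setI_eq0; apply/eqP/setP => x; rewrite !inE !ffunE !inE.
  apply/negbTE/negP => /andP[/eqP h1 /eqP h2].
  by move: uv; rewrite (emb_inj (etrans (esym h1) h2)) eqxx.
- apply/eqP/setP => x; rewrite !inE; apply/bigcupP.
  have hx : nth (false, 0) s x \in s by rewrite mem_nth // sz.
  have [u hu] := emb_surj (hin _ hx).
  by exists u => //; rewrite ffunE inE hu.
- apply/forallP => u; apply/forallP => v; apply/implyP => /andP[uv nw].
  apply/forall_inP => x; rewrite ffunE inE => /eqP hx.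
  apply/forall_inP => y; rewrite ffunE inE => /eqP hy.
  have euv : emb u != emb v by apply: contra uv => /eqP /emb_inj ->.
  case: (ltnP x y) => // yx.
  move: yx; rewrite leq_eqVlt => /orP[/eqP exy|yx].
    by move: euv; rewrite -hx -hy exy eqxx.
  have := (pairwiseP (false, 0) hpw) y x; rewrite !inE sz.
  move=> /(_ (ltn_ord y) (ltn_ord x) yx).
  by rewrite /okp hx hy (negbTE euv) -emb_NW nw.
Qed.

Definition cellof (S : {ffun cells lam -> {set 'I_M}}) (x : 'I_M) : bool * nat :=
  if [pick u | x \in S u] is Some u then emb u else (false, 0).
Definition phi S := [seq cellof S x | x <- enum 'I_M].

Lemma cellof_spec S : S \in SYT_plus lam k -> forall x u, (cellof S x == emb u) = (x \in S u).
Proof.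
rewrite inE => /and4P[_ /forallP hd /eqP hc _] x u.
rewrite /cellof; case: pickP => [u' xu'|none].
  rewrite (inj_eq emb_inj); case: eqP => [<-|ne]; first by rewrite xu'.
  apply/esym/negbTE/negP => xu.
  have := implyP (forallP (hd u') u) (introN eqP ne).
  by rewrite -setI_eq0 => /eqP /setP /(_ x); rewrite !inE xu xu'.
have : x \in [set: 'I_M] by rewrite inE.
by rewrite -hc => /bigcupP[u' _ xu']; rewrite none in xu'.
Qed.

Lemma cellof_shape S x : inshape b.+1 b (cellof S x).
Proof. by rewrite /cellof; case: pickP => [u _|_]; [apply: emb_shape|]. Qed.

Lemma nth_phi S (x : 'I_M) : nth (false, 0) (phi S) x = cellof S x.
Proof. by rewrite (nth_map x) ?size_enum_ord // nth_ord_enum. Qed.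

Lemma size_phi S : size (phi S) = M.
Proof. by rewrite size_map size_enum_ord. Qed.

Lemma psi_phi S : S \in SYT_plus lam k -> psi (phi S) = S.
Proof.
move=> hS; apply/ffunP => u; apply/setP => x.
by rewrite ffunE inE nth_phi cellof_spec.
Qed.

Lemma phi_good S : S \in SYT_plus lam k -> good b.+1 b (phi S).
Proof.
move=> /[dup] hS; rewrite inE => /and4P[/forallP hne _ _ /forallP hord].
apply/goodP; split => //.
- by move=> p /mapP[x _ ->]; apply: cellof_shape.
- move=> p /emb_surj [u <-].
  have /set0Pn [x xu] := hne u.
  by apply/mapP; exists x; [rewrite mem_enum | apply/eqP; rewrite eq_sym cellof_spec].
- apply/(pairwiseP (false, 0)) => i j; rewrite !inE size_phi => hi hj ij.
  have ei : nth (false, 0) (phi S) i = cellof S (Ordinal hi) by rewrite -nth_phi.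
  have ej : nth (false, 0) (phi S) j = cellof S (Ordinal hj) by rewrite -nth_phi.
  rewrite ei ej.
  have [ui hui] := emb_surj (cellof_shape S (Ordinal hi)).
  have [uj huj] := emb_surj (cellof_shape S (Ordinal hj)).
  rewrite -hui -huj /okp (inj_eq emb_inj) -emb_NW.
  case: eqP => //= ne; apply/negP => nw.
  have := hord uj => /forallP /(_ ui) /implyP.
  rewrite nw andbT (introN eqP ne) => /(_ isT) /forall_inP.
  have xj : Ordinal hj \in S uj by rewrite -cellof_spec // huj.
  have xi : Ordinal hi \in S ui by rewrite -cellof_spec // hui.
  move=> /(_ _ xj) /forall_inP /(_ _ xi) /=; lia.
Qed.

Lemma shape_alph p : inshape b.+1 b p -> p \in alphB N.
Proof. case: p => [r j]; rewrite mem_alphB /inshape /=; case: r; lia. Qed.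

Lemma card_SYT : #|SYT_plus lam k| = count (good b.+1 b) (allseq (alphB N) M).
Proof.
set G := filter (good b.+1 b) (allseq (alphB N) M).
have uG : uniq G by rewrite filter_uniq // uniq_allseq // uniq_alphB.
have memG s : (s \in G) = (size s == M) && good b.+1 b s.
  rewrite mem_filter mem_allseq andbC.
  case g: (good b.+1 b s); rewrite ?andbF ?andbT //.
  move/goodP: g => [_ hin _ _].
  have -> : all (mem (alphB N)) s by apply/allP => p /hin /shape_alph.
  by rewrite andbT.
have inj : {in G &, injective psi}.
  move=> s s'; rewrite !memG => /andP[/eqP sz g] /andP[/eqP sz' g'] e.
  apply: (@eq_from_nth _ (false, 0)); first by rewrite sz sz'.
  move=> i; rewrite sz => hi.
  move: g => /goodP[_ hin _ _].
  have his : i < size s by rewrite sz.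
  have [u hu] := emb_surj (hin _ (mem_nth (false, 0) his)).
  have : Ordinal hi \in psi s u by rewrite ffunE inE hu.
  by rewrite e ffunE inE /= => /eqP ->.
have E : SYT_plus lam k =i map psi G.
  move=> S; apply/idP/mapP => [hS|[s sG ->]].
    exists (phi S); last by rewrite psi_phi.
    by rewrite memG size_phi eqxx phi_good.
  by move: sG; rewrite memG => /andP[/eqP sz g]; apply: psi_SYT.
have uM : uniq (map psi G) by rewrite (map_inj_in_uniq inj).
rewrite (eq_card E); move/card_uniqP: uM => ->.
by rewrite size_map size_filter.
Qed.

End Bij.

Lemma card_SYT_Nw b k : #|SYT_plus [:: b.+1; b] k| = Nw (b.*2 + k + 1) b.+1 b.
Proof.
rewrite card_SYT -/(Nc _ _ _ _) Nc_Nw /=; try lia.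
congr Nw; rewrite /=; lia.
Qed.

Lemma Nw_zero m b : m < b.*2.+1 -> Nw m b.+1 b = 0.
Proof.
move=> hm; rewrite /Nw; apply/eqP; rewrite -leqn0 leqNgt -has_count.
apply/hasP => -[w]; rewrite mem_allseq => /andP[/eqP sz _] /eqP /runf_bound.
rewrite sz; lia.
Qed.

Lemma sum_eq_ord n d : d < n -> \sum_(b < n) ((nat_of_ord b == d) : nat) = 1.
Proof.
move=> hd; rewrite (bigD1 (Ordinal hd)) //= eqxx big1 // => i ne.
by rewrite (_ : (nat_of_ord i == d) = false) //; apply/negbTE; apply: contra ne => /eqP e;
  apply/eqP/val_inj.
Qed.

Lemma sum_Nw n : \sum_(b < n) Nw n b.+1 b = F n 0.
Proof.
have := Fw_eq n (t:=0) (d:=0) (leqnn 0); rewrite eqxx subnn => <-.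
rewrite /Nw (eq_bigr (fun b : 'I_n => \sum_(w <- allseq A4 n) (runf (0, 0) w == Some (b.+1, nat_of_ord b) : nat))); last first.
  by move=> b _; rewrite count_sum.
rewrite exchange_big count_sum big_seq [RHS]big_seq.
apply: eq_bigr => w; rewrite mem_allseq => /andP[/eqP sz _].
case e: (runf (0, 0) w) => [[t d]|] /=; last by rewrite big1.
have := runf_bound e; rewrite sz => hb.
case: (t =P d.+1) => [et|net].
  rewrite (eq_bigr (fun b : 'I_n => (nat_of_ord b == d) : nat)) ?sum_eq_ord //; try lia.
  move=> b _; rewrite et; congr nat_of_bool; apply/eqP/eqP => [[] ->|->] //.
rewrite big1 // => b _; apply/eqP; rewrite eqb0; apply/eqP => -[] e1 e2.
by apply: net; rewrite e1 e2.
Qed.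


Import GRing.Theory Num.Theory.
Local Open Scope ring_scope.

Definition bz (n : nat) (z : int) : int := if z is Posz k then ('C(n, k))%:Z else 0.

Lemma bzS n z : bz n.+1 (z + 1) = bz n z + bz n (z + 1).
Proof.
case: z => [k|k].
  have -> : (k%:Z + 1) = (k.+1)%:Z by lia.
  by rewrite /= binS PoszD addrC.
case: k => [|k].
  have -> : Negz 0 + 1 = 0%:Z by [].
  by rewrite /= !bin0 add0r.
have -> : (Negz k.+1 + 1) = Negz k by rewrite !NegzE; lia.
by [].
Qed.

Lemma bzSS n z : bz n.+2 (z + 2) = bz n z + 2%:R * bz n (z + 1) + bz n (z + 2).
Proof.
have -> : z + 2 = (z + 1) + 1 by rewrite -addrA.
rewrite bzS !bzS -addrA; ring.
Qed.

Lemma G_closed m h : (G m h)%:Z =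
  bz (m.*2) (m%:Z + 1 - h%:Z) - bz (m.*2) (m%:Z + 2 + h%:Z).
Proof.
elim: m h => [|m IH] h.
  case: h => [|[|h]] //=; rewrite !add0r //.
have e1 : m.+1%:Z + 1 - h%:Z = (m%:Z - h%:Z) + 2 by lia.
have e2 : m.+1%:Z + 2 + h%:Z = (m%:Z + 1 + h%:Z) + 2 by lia.
rewrite e1 e2 doubleS !bzSS.
case: h e1 e2 => [|h] e1 e2.
  rewrite [G m.+1 _]/= !addn0 !PoszD !IH.
  have -> : m%:Z - 0%:Z + 2 = m%:Z + 2 + 0%:Z by lia.
  have -> : m%:Z - 0%:Z + 1 = m%:Z + 1 - 0%:Z by lia.
  have -> : m%:Z - 0%:Z = m%:Z + 1 - 1%:Z by lia.
  have -> : m%:Z + 1 + 0%:Z + 2 = m%:Z + 2 + 1%:Z by lia.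
  have -> : m%:Z + 1 + 0%:Z + 1 = m%:Z + 2 + 0%:Z by lia.
  have -> : m%:Z + 1 + 0%:Z = m%:Z + 1 - 0%:Z by lia.
  ring.
rewrite [G m.+1 _]/= !PoszD !IH.
have -> : m%:Z - h.+1%:Z + 2 = m%:Z + 1 - h%:Z by lia.
have -> : m%:Z - h.+1%:Z + 1 = m%:Z + 1 - h.+1%:Z by lia.
have -> : m%:Z - h.+1%:Z = m%:Z + 1 - h.+2%:Z by lia.
have -> : m%:Z + 1 + h.+1%:Z + 2 = m%:Z + 2 + h.+2%:Z by lia.
have -> : m%:Z + 1 + h.+1%:Z + 1 = m%:Z + 2 + h.+1%:Z by lia.
have -> : m%:Z + 1 + h.+1%:Z = m%:Z + 2 + h%:Z by lia.
ring.
Qed.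

Lemma final_arith n : (2 < n)%N ->
  ((G n.-1 0)%:R : rat) = Cat n - Cat n.-1 /\
  Cat n - Cat n.-1 = 3%:R / (n.+1)%:R * ('C((n.*2 - 2)%N, n))%:R.
Proof.
case: n => [|p] // hp; rewrite succnK.
have hG := G_closed p 0.
have E1 : p%:Z + 1 - 0%:Z = (p.+1)%:Z by lia.
have E2 : p%:Z + 2 + 0%:Z = (p.+2)%:Z by lia.
rewrite E1 E2 in hG.
have -> : (p.+1.*2 - 2 = p.*2)%N by lia.
have e1 := mul_bin_left p.*2 p.
have e2 := mul_bin_left p.*2 p.+1.
have e3 := mul_bin_diag p.+1.*2 p.
have e4 := mul_bin_down p.*2.+1 p.
have -> : ((G p 0)%:R : rat) = ('C(p.*2, p.+1))%:R - ('C(p.*2, p.+2))%:R.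
  have := congr1 (fun z : int => (z%:~R : rat)) hG.
  by rewrite /= intrB.
rewrite /Cat.
move: e1 e2 e3 e4.
have -> : (p.*2 - p = p)%N by lia.
have -> : (p.*2 - p.+1 = p.-1)%N by lia.
have -> : (p.+1.*2.-1 = p.*2.+1)%N by lia.
have -> : (p.*2.+1.-1 = p.*2)%N by [].
have -> : (p.*2.+1 - p = p.+1)%N by lia.
move=> e1 e2 e3 e4.
have f1 := congr1 (fun x => x%:R : rat) e1; have f2 := congr1 (fun x => x%:R : rat) e2.
have f3 := congr1 (fun x => x%:R : rat) e3; have f4 := congr1 (fun x => x%:R : rat) e4.
rewrite /= !natrM in f1 f2 f3 f4.
set X := ('C(p.*2, p))%:R : rat in f1 f4 *.
set Y1 := ('C(p.*2, p.+1))%:R : rat in f1 f2 *.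
set Y2 := ('C(p.*2, p.+2))%:R : rat in f2 *.
set W := ('C(p.*2.+1, p))%:R : rat in f3 f4 *.
set Z := ('C(p.+1.*2, p.+1))%:R : rat in f3 *.
have pm1 : (p.-1)%:R = p%:R - 1 :> rat.
  have hp1 : p = (p.-1).+1 by lia.
  by rewrite [in RHS]hp1 -natr1 addrK.
have n1 : (p.+1)%:R != 0 :> rat by rewrite pnatr_eq0.
have n2 : (p.+2)%:R != 0 :> rat by rewrite pnatr_eq0.
have hY1 : Y1 = p%:R * X / (p.+1)%:R by rewrite -f1 mulrC mulKf.
have hY2 : Y2 = (p.-1)%:R * Y1 / (p.+2)%:R by rewrite -f2 mulrC mulKf.
have hW : W = (p.*2.+1)%:R * X / (p.+1)%:R by rewrite f4 mulrC mulKf.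
have hZ : Z = (p.+1.*2)%:R * W / (p.+1)%:R by rewrite f3 mulrC mulKf.
rewrite hZ hW hY2 hY1 pm1 -!muln2 !natrM.
have a1 : (p.+1)%:R = p%:R + 1 :> rat by rewrite natr1.
have a2 : (p.+2)%:R = p%:R + 2 :> rat by rewrite -addn2 natrD.
have a3 : ((p * 2).+1)%:R = p%:R * 2 + 1 :> rat by rewrite -addn1 natrD natrM.
have b1 : p%:R + 1 != 0 :> rat by rewrite -a1.
have b2 : p%:R + 2 != 0 :> rat by rewrite -a2.
rewrite a1 a2 a3.
by split; field; rewrite ?b1 ?b2.
Qed.

Unset Implicit Arguments.


Theorem corollary9 (n : nat) (hn : (3 <= n)%N) :
  (\sum_(b < n) \sum_(k < n | (b.*2 + k + 1 == n)%N)
      (#|SYT_plus [:: b.+1; nat_of_ord b] k|)%:R : rat)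
    = Cat n - Cat n.-1
  /\ Cat n - Cat n.-1 = 3%:R / (n.+1)%:R * ('C((n.*2 - 2)%N, n))%:R.
Proof.
have [H1 H2] := final_arith hn.
split; last exact: H2.
rewrite -H1.
rewrite (eq_bigr (fun b : 'I_n => (Nw n b.+1 b)%:R)); last first.
  move=> b _.
  case: (leqP (b.*2.+1) n) => h.
    have k0lt : (n - b.*2.+1 < n)%N by lia.
    rewrite (big_pred1 (Ordinal k0lt)); last first.
      move=> k /=; apply/eqP/eqP => [e|e]; first by apply/val_inj => /=; lia.
      by rewrite e /=; lia.
    rewrite card_SYT_Nw; congr (_%:R); congr Nw => /=; lia.
  rewrite big_pred0; last by move=> k /=; apply/negbTE; apply/eqP; lia.
  by rewrite Nw_zero.
rewrite -natr_sum sum_Nw.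
case: n hn {H1 H2} => [|[|m]] // _.
by rewrite F0_G.
Qed.
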